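(* Let $\mathcal{A}=\{1,\dots,N\}$, $\boldsymbol{\lambda}\in\mathbb{R}_+^N$, $\boldsymbol{\delta}\in\mathbb{R}^N$ with $\delta_i>0$, $B\in\mathbb{R}_+^{N\times N}$ with zero diagonal whose associated directed graph is weakly connected but not strongly connected, $\mathcal{S}\subset\mathbb{R}_+^N$ convex, and $q_i:\mathbb{R}_+\to(0,1]$ decreasing, strictly convex, continuously differentiable. For $\epsilon>0$ and $\mathbf{s}\in\mathcal{S}$ let $\bar{\mathbf{p}}^\epsilon(\mathbf{s})>\mathbf{0}$ be the unique strictly positive solution of $(\mathbf{1}-\mathbf{p})\circ(\boldsymbol{\lambda}+\epsilon\mathbf{1}+B\mathbf{p})-\mathbf{q}(\mathbf{s})^{-1}\circ\boldsymbol{\delta}\circ\mathbf{p}=\mathbf{0}$. Then for each $\mathbf{s}\in\mathcal{S}$, $\bar{\mathbf{p}}^\epsilon(\mathbf{s})$ is increasing in $\epsilon>0$.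
   Context: $\circ$ is the element-wise product; $\mathbf{q}(\mathbf{s})=(q_i(s_i))_i$ and $\mathbf{q}(\mathbf{s})^{-1}$ is its element-wise inverse. The associated graph has an edge $(j,i)$ iff $b_{i,j}>0$. Vectors are ordered componentwise. *)

(* Defs.v *)
From HB Require Import structures.
From mathcomp Require Import all_boot all_order all_algebra.
From mathcomp Require Import all_classical all_reals all_analysis.
Set Implicit Arguments. Unset Strict Implicit. Unset Printing Implicit Defensive.
Import Order.TTheory GRing.Theory Num.Theory.
Import numFieldNormedType.Exports.
Local Open Scope classical_set_scope.
Local Open Scope ring_scope.

Section Defs.
Variable R : realType.
Variable N : nat.

(* Edge (j,i) of the graph associated with B iff b_{i,j} > 0. *)
Definition edgeB (B : 'M[R]_N) : rel 'I_N := fun j i => 0 < B i j.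

Definition strongly_connected (B : 'M[R]_N) : Prop :=
  forall i j : 'I_N, connect (edgeB B) i j.

Definition weakly_connected (B : 'M[R]_N) : Prop :=
  forall i j : 'I_N,
    connect (fun x y => edgeB B x y || edgeB B y x) i j.

Definition mxvec_app (B : 'M[R]_N) (p : 'I_N -> R) (i : 'I_N) : R :=
  \sum_(j < N) B i j * p j.

Definition convex_setS (S : ('I_N -> R) -> Prop) : Prop :=
  forall x y, S x -> S y -> forall t : R, 0 <= t -> t <= 1 ->
    S (fun i => t * x i + (1 - t) * y i).

Definition solves_eq (lam delta : 'I_N -> R) (B : 'M[R]_N)
  (q : 'I_N -> R -> R) (eps : R) (s p : 'I_N -> R) : Prop :=
  forall i : 'I_N,
    (1 - p i) * (lam i + eps + mxvec_app B p i) - (q i (s i))^-1 * delta i * p i = 0.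

Definition vpos (p : 'I_N -> R) : Prop := forall i, 0 < p i.

Definition good_q (q : R -> R) : Prop :=
  [/\ (forall x, 0 <= x -> 0 < q x /\ q x <= 1),
      (forall x y, 0 <= x -> x <= y -> q y <= q x),
      (forall x y t, 0 <= x -> 0 <= y -> x != y -> 0 < t -> t < 1 ->
          q (t * x + (1 - t) * y) < t * q x + (1 - t) * q y)
    & {within [set x : R | 0 <= x], continuous q} /\
      exists dq : R -> R, {within [set x : R | 0 <= x], continuous dq} /\
        forall x : R, 0 < x -> is_derive x (1:R) q (dq x)].
End Defs.

(* Main.v *)
Require Import Defs.
From HB Require Import structures.
From mathcomp Require Import all_boot all_order all_algebra.
From mathcomp Require Import all_classical all_reals all_analysis.
From mathcomp Require Import ring lra.
Import Order.TTheory GRing.Theory Num.Theory.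
Local Open Scope ring_scope.

Theorem proposition4 (R : realType) (N : nat)
  (lam delta : 'I_N -> R) (B : 'M[R]_N)
  (S : ('I_N -> R) -> Prop) (q : 'I_N -> R -> R)
  (pbar : R -> ('I_N -> R) -> ('I_N -> R))
  (hlam : forall i, 0 <= lam i)
  (hdelta : forall i, 0 < delta i)
  (hB : forall i j, 0 <= B i j)
  (hBdiag : forall i, B i i = 0)
  (hweak : weakly_connected B)
  (hnstrong : ~ strongly_connected B)
  (hSpos : forall s, S s -> forall i, 0 <= s i)
  (hSconv : convex_setS S)
  (hq : forall i, good_q (q i))
  (hpbar_pos : forall eps s, 0 < eps -> S s -> vpos (pbar eps s))
  (hpbar_sol : forall eps s, 0 < eps -> S s ->
      solves_eq lam delta B q eps s (pbar eps s))
  (hpbar_uniq : forall eps s p, 0 < eps -> S s -> vpos p ->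
      solves_eq lam delta B q eps s p -> p = pbar eps s) :
  forall s, S s -> forall eps1 eps2 : R, 0 < eps1 -> eps1 <= eps2 ->
    forall i, pbar eps1 s i <= pbar eps2 s i.
Proof.
move=> s Ss e1 e2 e1p le12 i.
have e2p : 0 < e2 by apply: lt_le_trans le12.
set p1 := pbar e1 s; set p2 := pbar e2 s.
have P1 := hpbar_pos _ _ e1p Ss; have P2 := hpbar_pos _ _ e2p Ss.
have E1 := hpbar_sol _ _ e1p Ss; have E2 := hpbar_sol _ _ e2p Ss.
rewrite -/p1 in P1 E1; rewrite -/p2 in P2 E2.
set c := fun k => (q k (s k))^-1 * delta k.
have cp : forall k, 0 < c k.
  move=> k; rewrite /c; apply: mulr_gt0 => //.
  rewrite invr_gt0; case: (hq k) => H _ _ _; by case: (H _ (hSpos _ Ss k)).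
have Bp : forall p, vpos p -> forall k, 0 <= mxvec_app B p k.
  move=> p Pp k; apply: sumr_ge0 => j _; apply: mulr_ge0 => //; exact: ltW.
have lt1 : 0 < 1 - p1 i.
  have := E1 i; rewrite -/(c i) => H.
  have := Bp _ P1 i; have := hlam i; have := cp i; have := P1 i.
  move: (mxvec_app B p1 i) (lam i) (c i) (p1 i) H => b l cc x H.
  move=> *; rewrite subr_gt0; rewrite ltNge; apply/negP => hx.
  nra.
pose t := p1 i / p2 i.
case: (@arg_maxP _ _ 'I_N i (fun _ => true) (fun k => p1 k / p2 k) isT)
  => m _ Hm.
set tm := p1 m / p2 m in Hm.
have Hle : forall k, p1 k <= tm * p2 k.
  move=> k; have := Hm k isT; rewrite /= ler_pdivrMr //; exact: P2.
suff : tm <= 1.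
  move=> H; have := Hm i isT => /= H2; have : p1 i / p2 i <= 1 by apply: le_trans H.
  by rewrite ler_pdivrMr ?mul1r //; exact: P2.
rewrite leNgt; apply/negP => tgt.
have hp1m : p1 m = tm * p2 m by rewrite /tm divfK //; apply: lt0r_neq0; exact: P2.
have lt1m : 0 < 1 - p1 m.
  have := E1 m; rewrite -/(c m) => H.
  have := Bp _ P1 m; have := hlam m; have := cp m; have := P1 m.
  move: (mxvec_app B p1 m) (lam m) (c m) (p1 m) H => b l cc x H.
  move=> *; rewrite subr_gt0; rewrite ltNge; apply/negP => hx.
  nra.
have hb : mxvec_app B p1 m <= tm * mxvec_app B p2 m.
  rewrite /mxvec_app mulr_sumr; apply: ler_sum => j _.
  rewrite [tm * _]mulrCA. apply: ler_wpM2l => //.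
have := E1 m; have := E2 m; rewrite -/(c m).
have := Bp _ P2 m; have := hlam m; have := cp m; have := P2 m.
move: hb lt1m hp1m tgt.
move: (mxvec_app B p1 m) (mxvec_app B p2 m) (lam m) (c m) (p1 m) (p2 m) => b1 b2 l cc x y.
move=> hb lt1m hx tgt yp cp' lp b2p H2 H1.
rewrite hx in lt1m H1.
have H3 : (1 - tm * y) * (l + e1 + b1) <= (1 - tm * y) * (l + e2 + tm * b2).
  apply: ler_wpM2l; first exact: ltW.
  by apply: lerD => //; apply: lerD.
have K : (1 - tm*y)*(l+e2+tm*b2) = cc*(tm*y) + ((1-tm)*(l+e2+tm*y*b2) + tm*((1-y)*(l+e2+b2) - cc*y)) by ring.
have pos : 0 < l+e2+tm*y*b2.
  have : 0 <= tm*y*b2.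
    apply: mulr_ge0 => //; apply: mulr_ge0; apply: ltW => //; exact: lt_trans tgt.
  move=> h; apply: (@lt_le_trans _ _ (l+e2)); first exact: ltr_wpDl.
  by rewrite lerDl.
have neg : (1-tm)*(l+e2+tm*y*b2) < 0 by rewrite pmulr_llt0 // subr_lt0.
rewrite H2 mulr0 addr0 in K.
move/eqP: H1; rewrite subr_eq0 => /eqP H1.
rewrite H1 K lerDl in H3.
by move: neg; rewrite ltNge H3.
Qed.
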